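(* Let $F=\{f_i\}_{i=1}^N$ be a frame for an $n$-dimensional Hilbert space $\mathcal{H}_n$ with frame operator $S_F$, and let $p>1$. Let $L=\max\{\|S_F^{-1/2}f_i\|:1\le i\le N\}$, $I_1=\{i:\|S_F^{-1/2}f_i\|=L\}$, $I_2=\{1,\dots,N\}\setminus I_1$, and $H_j=\mathrm{span}\{f_i:i\in I_j\}$ for $j=1,2$. Suppose (i) $H_1\cap H_2=\{0\}$ and (ii) $\{f_i:i\in I_2\}$ is linearly independent. Then the canonical dual frame $S_F^{-1}F=\{S_F^{-1}f_i\}_{i=1}^N$ is a $1$-erasure spectrally optimal dual frame of $F$, i.e. $S_F^{-1}F\in\zeta_{\mathfrak{R}}^{(1),p}(F)$.
   Context: $S_F f=\sum_i\langle f,f_i\rangle f_i$ is the (positive invertible) frame operator. $G=\{g_i\}$ is a dual of $F$ if $f=\sum_i\langle f,f_i\rangle g_i$ for all $f$. For a dual $G$, $\mathrm{AE}_{\mathfrak{R}}^{(1),p}(F,G)=\{\frac1N\sum_{i=1}^N|\langle f_i,g_i\rangle|^p\}^{1/p}$ (the $\ell^p$-average of the spectral radii of the one-erasure error operators $f\mapsto\langle f,f_i\rangle g_i$), and $\zeta_{\mathfrak{R}}^{(1),p}(F)$ is the set of duals minimizing it over all duals of $F$. *)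

(* Defs.v *)
From HB Require Import structures.
From mathcomp Require Import all_boot all_order all_algebra.
From mathcomp Require Import reals exp.
From mathcomp Require Import complex.
From Stdlib Require Import ClassicalEpsilon.
Set Implicit Arguments. Unset Strict Implicit. Unset Printing Implicit Defensive.
Import Order.TTheory GRing.Theory Num.Theory.
Local Open Scope ring_scope.

(* The n-dimensional Hilbert space H_n is identified (via an orthonormal
   basis) with C^n, C = R[i], realised as row vectors 'rV[R[i]]_n with the
   standard inner product <u, v> = sum_k u_k * conj(v_k). *)

Definition cadj (R : realType) (m k : nat) (A : 'M[R[i]]_(m, k)) : 'M[R[i]]_(k, m) :=
  (map_mx (@conjc R) A)^T.

Definition ip (R : realType) (n : nat) (u v : 'rV[R[i]]_n) : R[i] :=
  (u *m cadj v) 0 0.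

Definition vnorm (R : realType) (n : nat) (v : 'rV[R[i]]_n) : R :=
  Num.sqrt (complex.Re (ip v v)).

Definition is_frame (R : realType) (n N : nat) (F : 'I_N -> 'rV[R[i]]_n) : Prop :=
  exists A B : R, 0 < A /\ 0 < B /\
    forall f : 'rV[R[i]]_n,
      A * vnorm f ^+ 2 <= \sum_i Normc.normc (ip f (F i)) ^+ 2 /\
      \sum_i Normc.normc (ip f (F i)) ^+ 2 <= B * vnorm f ^+ 2.

(* Matrix of the frame operator S_F f = sum_i <f, f_i> f_i, acting on row
   vectors from the right: S_F f = f *m frame_op F. *)
Definition frame_op (R : realType) (n N : nat) (F : 'I_N -> 'rV[R[i]]_n) : 'M[R[i]]_n :=
  \sum_i cadj (F i) *m F i.

Definition is_psd (R : realType) (n : nat) (B : 'M[R[i]]_n) : Prop :=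
  cadj B = B /\ forall v : 'rV[R[i]]_n, 0 <= complex.Re (ip (v *m B) v)
                                       /\ complex.Im (ip (v *m B) v) = 0.

Definition is_psd_sqrt (R : realType) (n : nat) (A B : 'M[R[i]]_n) : Prop :=
  is_psd B /\ B *m B = A.

Definition psd_sqrt (R : realType) (n : nat) (A : 'M[R[i]]_n) : 'M[R[i]]_n :=
  epsilon (inhabits 0) (is_psd_sqrt A).

Definition frame_op_invsqrt (R : realType) (n N : nat) (F : 'I_N -> 'rV[R[i]]_n) :=
  psd_sqrt (invmx (frame_op F)).

Definition Lmax (R : realType) (n N : nat) (F : 'I_N -> 'rV[R[i]]_n) : R :=
  \big[Num.max/0]_i vnorm (F i *m frame_op_invsqrt F).

Definition I1 (R : realType) (n N : nat) (F : 'I_N -> 'rV[R[i]]_n) : {set 'I_N} :=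
  [set i | vnorm (F i *m frame_op_invsqrt F) == Lmax F].

Definition I2 (R : realType) (n N : nat) (F : 'I_N -> 'rV[R[i]]_n) : {set 'I_N} :=
  ~: I1 F.

Definition span_of (R : realType) (n N : nat) (F : 'I_N -> 'rV[R[i]]_n)
  (I : {set 'I_N}) : 'M[R[i]]_n :=
  (\sum_(i in I) <<F i>>)%MS.

Definition lin_indep_on (R : realType) (n N : nat) (F : 'I_N -> 'rV[R[i]]_n)
  (I : {set 'I_N}) : Prop :=
  forall c : 'I_N -> R[i], \sum_(i in I) c i *: F i = 0 -> forall i, i \in I -> c i = 0.

Definition is_dual (R : realType) (n N : nat) (F G : 'I_N -> 'rV[R[i]]_n) : Prop :=
  forall f : 'rV[R[i]]_n, f = \sum_i ip f (F i) *: G i.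

Definition AE1p (R : realType) (n N : nat) (p : R) (F G : 'I_N -> 'rV[R[i]]_n) : R :=
  powR (N%:R^-1 * \sum_i powR (Normc.normc (ip (F i) (G i))) p) p^-1.

Definition zeta1p (R : realType) (n N : nat) (p : R) (F : 'I_N -> 'rV[R[i]]_n)
  (G : 'I_N -> 'rV[R[i]]_n) : Prop :=
  is_dual F G /\ forall G', is_dual F G' -> AE1p p F G <= AE1p p F G'.

Definition canonical_dual (R : realType) (n N : nat) (F : 'I_N -> 'rV[R[i]]_n) :
  'I_N -> 'rV[R[i]]_n :=
  fun i => F i *m invmx (frame_op F).

(* Main.v *)
Require Import Defs.
From HB Require Import structures.
From mathcomp Require Import all_boot all_order all_algebra.
From mathcomp Require Import reals exp.
From mathcomp Require Import complex.
From mathcomp Require Import spectral sesquilinear.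
From Stdlib Require Import ClassicalEpsilon.
From mathcomp Require Import ring lra.
Set Implicit Arguments. Unset Strict Implicit. Unset Printing Implicit Defensive.
Import Order.TTheory GRing.Theory Num.Theory.
Local Open Scope ring_scope.

Local Open Scope sesquilinear_scope.

Lemma cadjK (R : realType) m k (A : 'M[R[i]]_(m, k)) : cadj (cadj A) = A.
Proof. by apply/matrixP=> a b; rewrite /cadj !mxE conjcK. Qed.

Lemma cadjM (R : realType) m k l (A : 'M[R[i]]_(m, k)) (B : 'M[R[i]]_(k, l)) :
  cadj (A *m B) = cadj B *m cadj A.
Proof. by rewrite /cadj map_mxM trmx_mul. Qed.

Lemma cadjD (R : realType) m k (A B : 'M[R[i]]_(m, k)) : cadj (A + B) = cadj A + cadj B.
Proof. by apply/matrixP=> a b; rewrite /cadj !mxE rmorphD. Qed.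

Lemma cadjN (R : realType) m k (A : 'M[R[i]]_(m, k)) : cadj (- A) = - cadj A.
Proof. by apply/matrixP=> a b; rewrite /cadj !mxE rmorphN. Qed.

Lemma cadj0 (R : realType) m k : cadj (0 : 'M[R[i]]_(m, k)) = 0.
Proof. by apply/matrixP=> a b; rewrite /cadj !mxE rmorph0. Qed.

Lemma cadj_sum (R : realType) m k (I : finType) (P : pred I) (X : I -> 'M[R[i]]_(m, k)) :
  cadj (\sum_(i | P i) X i) = \sum_(i | P i) cadj (X i).
Proof. by apply: (big_morph _ (@cadjD R m k) (@cadj0 R m k)). Qed.

Lemma cadj1 (R : realType) n : cadj (1%:M : 'M[R[i]]_n) = 1%:M.
Proof. by rewrite /cadj map_mx1 trmx1. Qed.

Lemma cadjE (R : realType) m k (A : 'M[R[i]]_(m, k)) : cadj A = A ^t* .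
Proof. by rewrite /cadj map_trmx. Qed.

Lemma mx11_mul (R : realType) n (x : 'M[R[i]]_1) (h : 'M[R[i]]_(1, n)) : x *m h = x 0 0 *: h.
Proof. by apply/matrixP=> a b; rewrite !mxE big_ord1 !ord1. Qed.

Lemma ip_scale (R : realType) n (f g h : 'rV[R[i]]_n) : ip f g *: h = f *m cadj g *m h.
Proof. by rewrite mx11_mul. Qed.

Lemma ipD2 (R : realType) n (f g h : 'rV[R[i]]_n) : ip f (g + h) = ip f g + ip f h.
Proof. by rewrite /ip cadjD mulmxDr mxE. Qed.

Lemma ip_ge0 (R : realType) n (u : 'rV[R[i]]_n) : 0 <= ip u u.
Proof.
rewrite /ip mxE; apply: sumr_ge0 => k _; rewrite /cadj !mxE.
exact: (@mul_conjC_ge0 _ (u 0 k)).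
Qed.

Lemma ip_eq0 (R : realType) n (u : 'rV[R[i]]_n) : ip u u = 0 -> u = 0.
Proof.
rewrite /ip mxE => /eqP; rewrite psumr_eq0 => [/allP H|k _]; last first.
  by rewrite /cadj !mxE; exact: (@mul_conjC_ge0 _ (u 0 k)).
apply/rowP=> k; have := H k (mem_index_enum k); rewrite /cadj !mxE.
move=> Hk; apply/eqP; rewrite ?mxE -(@mul_conjC_eq0 _ (u 0 k)); exact: Hk.
Qed.

Lemma ipE (R : realType) n (u : 'rV[R[i]]_n) : ip u u = ((vnorm u ^+ 2)%:C)%C.
Proof.
have := ip_ge0 u; rewrite lecE /vnorm => /andP[/eqP Him Hre].
rewrite sqr_sqrtr //; move: Him Hre; case: (ip u u) => a b /= -> _.
by [].
Qed.

Local Open Scope sesquilinear_scope.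

Lemma frame_opE (R : realType) n N (F : 'I_N -> 'rV[R[i]]_n) f :
  f *m frame_op F = \sum_i ip f (F i) *: F i.
Proof. by rewrite /frame_op mulmx_sumr; apply: eq_bigr => i _; rewrite mulmxA ip_scale. Qed.

Lemma cadj_frame_op (R : realType) n N (F : 'I_N -> 'rV[R[i]]_n) :
  cadj (frame_op F) = frame_op F.
Proof. by rewrite /frame_op cadj_sum; apply: eq_bigr => i _; rewrite cadjM cadjK. Qed.

Lemma cadj00 (R : realType) (x : 'M[R[i]]_1) : cadj x 0 0 = conjc (x 0 0).
Proof. by rewrite /cadj !mxE. Qed.

Lemma frame_quad (R : realType) n N (F : 'I_N -> 'rV[R[i]]_n) w :
  (w *m frame_op F *m cadj w) 0 0 = \sum_i ip w (F i) * (ip w (F i))^*.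
Proof.
rewrite frame_opE mulmx_suml summxE; apply: eq_bigr => i _.
rewrite ip_scale -mulmxA mxE big_ord1 -[F i *m cadj w]cadjK cadjM cadjK cadj00.
by [].
Qed.

Lemma frame_unit (R : realType) n N (F : 'I_N -> 'rV[R[i]]_n) :
  is_frame F -> frame_op F \in unitmx.
Proof.
move=> [A [B [A0 [_ HF]]]].
rewrite unitmxE unitfE; apply/negP => /det0P [v v0 vS].
have Hq := frame_quad F v; rewrite vS mul0mx mxE in Hq.
have Hx : forall i, ip v (F i) = 0.
  move=> i; move/esym/eqP: Hq; rewrite psumr_eq0 => [/allP H|k _]; last first.
    exact: mul_conjC_ge0.
  by apply/eqP; rewrite -mul_conjC_eq0; apply: H; rewrite mem_index_enum.
have [H1 _] := HF v.
have : A * vnorm v ^+ 2 <= 0.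
  apply: (le_trans H1); rewrite big1 // => i _; rewrite Hx.
  by rewrite /Normc.normc /= expr0n /= add0r sqrtr0 expr0n.
rewrite pmulr_rle0 // => Hv.
have Hv0 : vnorm v ^+ 2 = 0 by apply/eqP; rewrite eq_le Hv sqr_ge0.
by move/negP: v0; apply; apply/eqP/ip_eq0; rewrite ipE Hv0.
Qed.

Local Open Scope sesquilinear_scope.

Definition Mx (R : realType) n (P : 'M[R[i]]_n) (e : 'rV[R[i]]_n) :=
  cadj P *m diag_mx e *m P.

Lemma MxM (R : realType) n (P : 'M[R[i]]_n) (e e' : 'rV[R[i]]_n) : P \is unitarymx ->
  Mx P e *m Mx P e' = Mx P (\row_k (e 0 k * e' 0 k)).
Proof.
move=> Pu; rewrite /Mx -!mulmxA; congr (_ *m _); rewrite !mulmxA.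
rewrite cadjE (mulmxtVK _ Pu); congr (_ *m _).
apply/matrixP=> a b; rewrite mul_diag_mx !mxE.
by case: eqP => _; rewrite ?mulr1n ?mulr0n ?mulr0.
Qed.

Lemma cadj_diag (R : realType) n (e : 'rV[R[i]]_n) :
  cadj (diag_mx e) = diag_mx (\row_k conjc (e 0 k)).
Proof.
apply/matrixP=> a b; rewrite /cadj !mxE rmorphMn /= eq_sym.
by case: eqVneq => [->|]; rewrite ?mulr1n ?mulr0n.
Qed.

Lemma cadj_Mx (R : realType) n (P : 'M[R[i]]_n) (e : 'rV[R[i]]_n) :
  (forall k, conjc (e 0 k) = e 0 k) -> cadj (Mx P e) = Mx P e.
Proof.
move=> He; rewrite /Mx !cadjM cadjK cadj_diag mulmxA; congr (_ *m _ *m _).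
by congr diag_mx; apply/rowP=> k; rewrite mxE He.
Qed.

Lemma cadj_delta (R : realType) n (k : 'I_n) :
  cadj (delta_mx 0 k : 'rV[R[i]]_n) = delta_mx k 0.
Proof.
apply/matrixP=> a b; rewrite /cadj !mxE rmorph_nat.
by rewrite andbC.
Qed.

Lemma psd_sqrt_exists (R : realType) n (M : 'M[R[i]]_n) :
  cadj M = M -> (forall v : 'rV_n, 0 <= (v *m M *m cadj v) 0 0) ->
  exists B, is_psd_sqrt M B.
Proof.
move=> Mc Mpos.
have Mh : M \is hermsymmx by apply/is_hermitianmxP; rewrite expr0 scale1r -cadjE Mc.
have /orthomx_spectralP HM := hermitian_normalmx Mh.
set P := spectralmx M in HM; set d := spectral_diag M in HM.
have Pu : P \is unitarymx by exact: spectral_unitarymx.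
have HM' : M = Mx P d by rewrite /Mx cadjE -invmx_unitary.
have PMP : P *m M *m cadj P = diag_mx d.
  rewrite HM' /Mx cadjE !mulmxA (unitarymxP Pu) mul1mx -mulmxA (unitarymxP Pu).
  by rewrite mulmx1.
have Hd : forall k, 0 <= d 0 k.
  move=> k; pose ek := (delta_mx 0 k : 'rV[R[i]]_n); have := Mpos (ek *m P).
  have -> : ek *m P *m M *m cadj (ek *m P) = ek *m (P *m M *m cadj P) *m cadj ek.
    by rewrite cadjM !mulmxA.
  rewrite PMP /ek -rowE row_diag_mx cadj_delta -scalemxAl mul_delta_mx.
  by rewrite !mxE eqxx mulr1.
pose s := \row_k sqrtC (d 0 k).
pose t := \row_k sqrtC (s 0 k).
have s0 : forall k, 0 <= s 0 k by move=> k; rewrite mxE sqrtC_ge0.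
have t0 : forall k, 0 <= t 0 k by move=> k; rewrite mxE sqrtC_ge0.
have sc : forall k, conjc (s 0 k) = s 0 k by move=> k; exact: (geC0_conj (s0 k)).
have tc : forall k, conjc (t 0 k) = t 0 k by move=> k; exact: (geC0_conj (t0 k)).
exists (Mx P s); split; last first.
  rewrite MxM // [RHS]HM'; congr Mx; apply/rowP=> k; rewrite /s !mxE -expr2 sqrtCK //.
split; first exact: cadj_Mx.
move=> v.
have -> : Mx P s = Mx P t *m Mx P t.
  rewrite MxM //; congr Mx; apply/rowP=> k; rewrite /t !mxE -expr2 sqrtCK //.
have : 0 <= ip (v *m Mx P t) (v *m Mx P t) by exact: ip_ge0.
rewrite /ip cadjM (cadj_Mx _ tc) !mulmxA => H.
rewrite /ip ?mulmxA; move: H; rewrite lecE => /andP[/eqP H1 H2]; split; first exact: H2.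
by rewrite H1.
Qed.

Local Close Scope sesquilinear_scope.

Lemma dual_sum (R : realType) n N (F G : 'I_N -> 'rV[R[i]]_n) :
  is_dual F G -> \sum_i cadj (F i) *m G i = 1%:M.
Proof.
move=> HG; apply/row_matrixP => j; rewrite !rowE mulmx1.
rewrite [RHS](HG (delta_mx 0 j)) mulmx_sumr; apply: eq_bigr => i _.
by rewrite mulmxA ip_scale.
Qed.

Lemma canon_dual (R : realType) n N (F : 'I_N -> 'rV[R[i]]_n) :
  is_frame F -> is_dual F (canonical_dual F).
Proof.
move=> /frame_unit Su f; rewrite /canonical_dual.
have -> : \sum_i ip f (F i) *: (F i *m invmx (frame_op F)) = f *m frame_op F *m invmx (frame_op F).
  by rewrite /frame_op mulmx_sumr mulmx_suml; apply: eq_bigr => i _; rewrite ip_scale !mulmxA.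
by rewrite mulmxK.
Qed.

Lemma invS_cadj (R : realType) n N (F : 'I_N -> 'rV[R[i]]_n) :
  is_frame F -> cadj (invmx (frame_op F)) = invmx (frame_op F).
Proof.
move=> /frame_unit Su.
have H : cadj (invmx (frame_op F)) *m frame_op F = 1%:M.
  by rewrite -{2}cadj_frame_op -cadjM mulmxV // cadj1.
by rewrite -[LHS](mulmxK Su) H mul1mx.
Qed.

Lemma invS_pos (R : realType) n N (F : 'I_N -> 'rV[R[i]]_n) :
  is_frame F -> forall v : 'rV_n, 0 <= (v *m invmx (frame_op F) *m cadj v) 0 0.
Proof.
move=> HF v; have Su := frame_unit HF.
set w := v *m invmx (frame_op F).
have -> : cadj v = cadj (w *m frame_op F) by rewrite /w mulmxKV.
rewrite cadjM cadj_frame_op mulmxA frame_quad.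
by apply: sumr_ge0 => i _; exact: mul_conjC_ge0.
Qed.

Lemma invsqrt_spec (R : realType) n N (F : 'I_N -> 'rV[R[i]]_n) :
  is_frame F -> is_psd_sqrt (invmx (frame_op F)) (frame_op_invsqrt F).
Proof.
move=> HF; rewrite /frame_op_invsqrt /psd_sqrt; apply: epsilon_spec.
exact: (psd_sqrt_exists (invS_cadj HF) (invS_pos HF)).
Qed.

Lemma cH (R : realType) n N (F : 'I_N -> 'rV[R[i]]_n) :
  is_frame F -> forall i,
  ip (F i) (canonical_dual F i) = ((vnorm (F i *m frame_op_invsqrt F) ^+ 2)%:C)%C.
Proof.
move=> HF i; have [[Bc _] BB] := invsqrt_spec HF.
rewrite -ipE /ip /canonical_dual cadjM invS_cadj // -BB.
by rewrite cadjM Bc !mulmxA.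
Qed.

Lemma sub_span (R : realType) n N (F : 'I_N -> 'rV[R[i]]_n) (I : {set 'I_N})
   (c : 'I_N -> R[i]) (P : pred 'I_N) :
  (forall i, P i -> i \in I) ->
  ((\sum_(i | P i) c i *: F i)%R <= span_of F I)%MS.
Proof.
move=> HP; apply: summx_sub => i Pi; apply: scalemx_sub.
by apply: (sumsmx_sup i) => //; [exact: HP | rewrite genmxE].
Qed.

Lemma sum_mulB (R : realType) (I : finType) m k l (A : I -> 'M[R[i]]_(m,k))
  (B C : I -> 'M[R[i]]_(k,l)) :
  \sum_i A i *m (B i - C i) = \sum_i A i *m B i - \sum_i A i *m C i.
Proof. by rewrite -sumrB; apply: eq_bigr => i _; exact: mulmxBr. Qed.

Lemma key (R : realType) n N (F G : 'I_N -> 'rV[R[i]]_n) :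
  is_frame F ->
  (span_of F (I1 F) :&: span_of F (I2 F) == (0 : 'M[R[i]]_n))%MS ->
  lin_indep_on F (I2 F) -> is_dual F G ->
  (forall i, i \in I2 F -> G i = canonical_dual F i) /\
  \sum_(i in I1 F) ip (F i) (G i - canonical_dual F i) = 0.
Proof.
move=> HF /andP[Hcap _] Hli HG.
set H := canonical_dual F.
have HH := canon_dual HF.
pose U : 'I_N -> 'rV[R[i]]_n := fun i => G i - H i.
have hU : \sum_i cadj (F i) *m U i = 0.
  by rewrite sum_mulB !dual_sum // subrr.
have hU' : \sum_i cadj (U i) *m F i = 0.
  have E : \sum_i cadj (U i) *m F i = \sum_i cadj (cadj (F i) *m U i).
    by apply eq_bigr => i _; rewrite cadjM cadjK.
  by rewrite E -cadj_sum hU cadj0.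
have hv : forall v, \sum_i ip v (U i) *: F i = 0.
  move=> v; transitivity (v *m \sum_i cadj (U i) *m F i); last by rewrite hU' mulmx0.
  rewrite mulmx_sumr; apply eq_bigr => i _.
  by rewrite ip_scale mulmxA.
have hc : forall v i, i \in I2 F -> ip v (U i) = 0.
  move=> v; apply: Hli; have := hv v.
  rewrite (bigID (fun i => i \in I1 F)) /= => /eqP; rewrite addr_eq0 => /eqP Hs.
  have Heq : \sum_(i in I2 F) ip v (U i) *: F i = \sum_(i | ~~ (i \in I1 F)) ip v (U i) *: F i.
    by apply: eq_bigl => i; rewrite /I2 in_setC.
  apply/eqP; rewrite -submx0; apply: submx_trans Hcap; rewrite sub_capmx.
  apply/andP; split; last by apply: sub_span.
  have Hs' : \sum_(i | i \notin I1 F) ip v (U i) *: F i = - \sum_(i in I1 F) ip v (U i) *: F i.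
    by rewrite Hs opprK.
  rewrite Heq Hs' (eqmx_opp _); apply: sub_span => i; by [].
have hU0 : forall i, i \in I2 F -> U i = 0.
  by move=> i Hi; apply: ip_eq0; apply: hc.
split.
  by move=> i Hi; apply/eqP; rewrite -subr_eq0; apply/eqP; exact: hU0.
have hU1 : \sum_(i in I1 F) cadj (U i) *m F i = 0.
  move: hU'; rewrite (bigID (fun i => i \in I1 F)) /= [X in _ + X]big1 ?addr0 //.
  by move=> i Hi; rewrite hU0 ?cadj0 ?mul0mx // /I2 in_setC.
transitivity (\tr (\sum_(i in I1 F) cadj (U i) *m F i)); last by rewrite hU1 mxtrace0.
rewrite raddf_sum; apply eq_bigr => i _; rewrite /= mxtrace_mulC /mxtrace big_ord1.
by [].
Qed.

Lemma young_tangent (R : realType) (x a p : R) : 0 <= x -> 0 <= a -> 1 < p ->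
  p * (x * a `^ (p - 1)) <= x `^ p + (p - 1) * a `^ p.
Proof.
move=> x0 a0 p1.
have p0 : 0 < p by apply: lt_trans p1.
have p10 : 0 < p - 1 by rewrite subr_gt0.
pose q := p / (p - 1).
have q0 : 0 < q by rewrite divr_gt0.
have pq : p^-1 + q^-1 = 1.
  rewrite /q invf_div; field; rewrite ?gt_eqF //.
have := conjugate_powR x0 (powR_ge0 a (p - 1)) p0 q0 pq.
rewrite -powRrM (_ : (p - 1) * q = p); last by rewrite /q mulrC divfK ?gt_eqF.
move=> H.
have E : p * (x `^ p / p + a `^ p / q) = x `^ p + (p - 1) * a `^ p.
  by rewrite /q; field; rewrite ?gt_eqF.
by rewrite -E ler_pM2l.
Qed.

Lemma power_mean (R : realType) (I : finType) (A : {pred I}) (x : I -> R) (a p : R) :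
  1 < p -> 0 <= a -> (forall i, i \in A -> 0 <= x i) ->
  #|A|%:R * a <= \sum_(i in A) x i ->
  #|A|%:R * a `^ p <= \sum_(i in A) x i `^ p.
Proof.
move=> p1 a0 x0 Hs.
have p0 : 0 < p by apply: lt_trans p1.
set b := a `^ (p - 1).
have ab : a * b = a `^ p by rewrite /b mulr_powRB1.
have H1 : \sum_(i in A) (p * (x i * b) - (p - 1) * a `^ p) <= \sum_(i in A) x i `^ p.
  apply: ler_sum => i Hi; rewrite lerBlDr; exact: young_tangent (x0 i Hi) a0 p1.
apply: le_trans H1.
have E2 : \sum_(i in A) (p * (x i * b) - (p - 1) * a `^ p) =
    p * b * \sum_(i in A) x i - #|A|%:R * ((p - 1) * a `^ p).
  rewrite sumrB sumr_const -mulr_natl mulr_sumr; congr (_ - _).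
  - by apply: eq_bigr => i _; ring.
  - by rewrite mulr1 mulr_natl.
have Hb : 0 <= p * b by apply: mulr_ge0; [exact: ltW | exact: powR_ge0].
rewrite E2 -ab.
have E3 : #|A|%:R * (a * b) = p * b * (#|A|%:R * a) - #|A|%:R * ((p - 1) * (a * b)) by ring.
rewrite E3 lerD2r; apply: (ler_wpM2l Hb); exact Hs.
Qed.

Lemma normc_sum (R : realType) (I : finType) (A : {pred I}) (f : I -> R[i]) :
  Normc.normc (\sum_(i in A) f i) <= \sum_(i in A) Normc.normc (f i).
Proof.
elim/big_ind2: _ => [|x1 x2 y1 y2 H1 H2|i _].
- by rewrite Normc.normc0.
- exact: le_trans (le_normcD _ _) (lerD H1 H2).
- by [].
Qed.

Lemma normc_real (R : realType) (x : R) : 0 <= x -> Normc.normc (x%:C)%C = x.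
Proof.
by move=> x0; rewrite /Normc.normc /= expr0n /= addr0 sqrtr_sqr ger0_norm.
Qed.

Lemma split_sum_le (R : realType) (I : finType) (P : pred I) (f g : I -> R) :
  \sum_(i | P i) f i <= \sum_(i | P i) g i -> (forall i, ~~ P i -> f i = g i) ->
  \sum_i f i <= \sum_i g i.
Proof.
move=> H1 H2; rewrite [X in X <= _](bigID P) [X in _ <= X](bigID P) /=.
apply: lerD => //; rewrite le_eqVlt; apply/orP; left; apply/eqP.
by apply: eq_bigr => i Hi; apply: H2.
Qed.

Lemma normc_ge0' (R : realType) (x : R[i]) : 0 <= Normc.normc x.
Proof. by case: x => a b; rewrite /Normc.normc sqrtr_ge0. Qed.

Lemma power_mean_set (R : realType) (I : finType) (A : {set I}) (x : I -> R) (a p : R) :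
  1 < p -> 0 <= a -> (forall i, i \in A -> 0 <= x i) ->
  #|A|%:R * a <= \sum_(i in A) x i ->
  #|A|%:R * a `^ p <= \sum_(i in A) x i `^ p.
Proof. exact: power_mean. Qed.

Lemma sum_split_eq (V : zmodType) (I : finType) (A : {set I}) (f g : I -> V) (c : V) :
  \sum_(i in A) g i = 0 -> (forall i, i \in A -> f i = c) ->
  \sum_(i in A) (f i + g i) = c *+ #|A|.
Proof.
move=> Hg Hf; rewrite big_split /= Hg addr0 -sumr_const.
by apply: eq_bigr => i Hi; exact: Hf.
Qed.

Theorem theorem5p5 (R : realType) (n N : nat) (F : 'I_N -> 'rV[R[i]]_n) (p : R) :
  is_frame F -> 1 < p ->
  (span_of F (I1 F) :&: span_of F (I2 F) == (0 : 'M[R[i]]_n))%MS ->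
  lin_indep_on F (I2 F) ->
  zeta1p p F (canonical_dual F).
Proof.
move=> HF p1 Hcap Hli.
have HH := canon_dual HF.
split; first exact: HH.
move=> G HG.
have [HG2 HGs] := key HF Hcap Hli HG.
have p0 : 0 < p by apply: lt_trans p1.
pose a := Lmax F ^+ 2.
have a0 : 0 <= a by rewrite /a sqr_ge0.
have cHi : forall i, i \in I1 F -> ip (F i) (canonical_dual F i) = (a%:C)%C.
  by move=> i; rewrite /I1 inE => /eqP Hi; rewrite cH // Hi.
rewrite /AE1p; apply: ge0_ler_powR.
- by rewrite invr_ge0 ltW.
- by rewrite nnegrE; apply: mulr_ge0; [rewrite invr_ge0 ler0n | apply: sumr_ge0 => i _; exact: powR_ge0].
- by rewrite nnegrE; apply: mulr_ge0; [rewrite invr_ge0 ler0n | apply: sumr_ge0 => i _; exact: powR_ge0].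
apply: ler_wpM2l; first by rewrite invr_ge0 ler0n.
apply: (@split_sum_le R _ (fun i => i \in I1 F)
  (fun i => Normc.normc (ip (F i) (canonical_dual F i)) `^ p)
  (fun i => Normc.normc (ip (F i) (G i)) `^ p)); last first.
  by move=> i Hi; rewrite HG2; last by rewrite /I2 in_setC.
have E1 : \sum_(i in I1 F) Normc.normc (ip (F i) (canonical_dual F i)) `^ p = #|I1 F|%:R * a `^ p.
  transitivity (\sum_(i in I1 F) a `^ p).
    apply eq_bigr => i Hi; rewrite (cHi i Hi) (normc_real a0); reflexivity.
  by rewrite sumr_const mulr_natl.
apply: (@le_trans _ _ (#|I1 F|%:R * a `^ p)); first by rewrite E1.
apply: (@power_mean_set R _ (I1 F) (fun i => Normc.normc (ip (F i) (G i))) a p p1 a0).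
  by move=> i _; exact: normc_ge0'.
apply: le_trans (normc_sum _ _).
have -> : \sum_(i in I1 F) ip (F i) (G i) = (a%:C)%C *+ #|I1 F|.
  transitivity (\sum_(i in I1 F) (ip (F i) (canonical_dual F i) + ip (F i) (G i - canonical_dual F i))).
    by apply eq_bigr => i _; rewrite -ipD2 addrC subrK.
  exact: (sum_split_eq HGs cHi).
by rewrite normcMn (normc_real a0) mulr_natl.
Qed.
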